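(* For integers $d\geqslant 0$ and real $x>0$ with $0\leqslant d\leqslant x$, $$\sum_{K_d-d<k\leqslant K_d}k^3=x\big(d^2\sqrt{dx}+O(d^{7/2}x^{-1/2})+O(d^2)\big),$$ where $k$ runs over integers, $K_d=K_d(x)$, and the implied constants are absolute.
   Context: For an integer $d\geqslant 0$ and real $x>0$, $K_d(x)=\big\lfloor \big(d+\sqrt{d^2+4dx}\,\big)/2\big\rfloor$, where $\lfloor\cdot\rfloor$ is the integer part. *)

(* Defs.v *)
From HB Require Import structures.
From mathcomp Require Import all_boot all_order all_algebra.
From mathcomp Require Import reals.
Set Implicit Arguments. Unset Strict Implicit. Unset Printing Implicit Defensive.
Import Order.TTheory GRing.Theory Num.Theory.
Local Open Scope ring_scope.

Definition Kd {R : realType} (d : nat) (x : R) : int :=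
  Num.floor ((d%:R + Num.sqrt (d%:R ^+ 2 + 4 * d%:R * x)) / 2).

(* Sum of f k over the integers k with a < k <= b (empty if b <= a). *)
Definition int_interval_sum {R : realType} (a b : int) (f : int -> R) : R :=
  \sum_(k <- [seq a + (i.+1)%:Z | i <- iota 0 `|b - a|%N] | k <= b) f k.

(* Main.v *)
Require Import Defs.
From HB Require Import structures.
From mathcomp Require Import all_boot all_order all_algebra.
From mathcomp Require Import reals ring lra.
Import Order.TTheory GRing.Theory Num.Theory.
Local Open Scope ring_scope.
Lemma core (R : realFieldType) (d x q s w : R) :
  1 <= d -> d <= x -> 0 <= q -> q ^+ 2 = d * x -> 0 <= s ->
  s ^+ 2 = d ^+ 2 + 4 * d * x -> w <= s -> s - 2 < w ->
  `| d * (w + 1) * (w ^+ 2 + d ^+ 2 + 2 * w) / 8 - x * (d ^+ 2 * q) |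
  <= 8 * (d ^+ 3 * q + d ^+ 2 * x).
Proof.
move=> d1 dx q0 qE s0 sE ws sw.
have x1 : 1 <= x by lra.
have qd : d <= q by nra.
have q1 : 1 <= q by lra.
have s2q : 2 * q <= s by nra.
have sdq : s <= d + 2 * q by nra.
have w0 : 0 <= w by lra.
have hE : 4 * q * (s - 2 * q) <= d ^+ 2 by nra.
set E1 := (w + 1) * (w ^+ 2 + d ^+ 2 + 2 * w) - s ^+ 3.
have E1u : E1 <= 3 * s ^+ 2 + 2 * s + d ^+ 2 * s + d ^+ 2.
  rewrite /E1.
  have : (w + 1) * (w ^+ 2 + d ^+ 2 + 2 * w) <= (s + 1) * (s ^+ 2 + d ^+ 2 + 2 * s).
    apply: ler_pM; [nra|nra|lra|nra].
  nra.
have E1l : - (6 * s ^+ 2) <= E1.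
  rewrite /E1.
  have h1 : (s - 2) ^+ 3 <= w ^+ 3.
    have: (s - 2) ^+ 3 - w ^+ 3 = (s - 2 - w) * ((s-2)^+2 + (s-2)*w + w^+2) by ring.
    have : 0 <= (s-2)^+2 + (s-2)*w + w^+2 by nra.
    nra.
  nra.
have ds2 : d * s ^+ 2 <= 5 * (d ^+ 2 * x) by nra.
have dsa : d * s <= d * s ^+ 2 by nra.
have d3s : d ^+ 3 * s <= 3 * (d ^+ 3 * q).
  have d3p : 0 <= d ^+ 3 by apply: exprn_ge0; lra.
  have : d ^+ 3 * s <= d ^+ 3 * (3 * q) by apply: ler_wpM2l => //; lra.
  lra.
have d3 : d ^+ 3 <= d ^+ 2 * x.
  have d2p : 0 <= d ^+ 2 by apply: exprn_ge0; lra.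
  rewrite exprS mulrC; apply: ler_wpM2l => //.
have key : d ^+ 2 * x * (s - 2 * q) * 4 <= d ^+ 3 * q.
  have : d ^+ 2 * x * (s - 2 * q) * 4 = d * q * (4 * q * (s - 2 * q)).
    have : d ^+ 2 * x = d * q ^+ 2 by rewrite qE; ring.
    move=> ->; ring.
  move=> ->.
  have : d * q * (4 * q * (s - 2 * q)) <= d * q * d ^+ 2 by apply: ler_wpM2l => //; apply: mulr_ge0; lra.
  move=> h; apply: le_trans h _; lra.
have e : d * (w + 1) * (w ^+ 2 + d ^+ 2 + 2 * w) / 8 - x * (d ^+ 2 * q)
   = (d * E1 + d ^+ 3 * s + d ^+ 2 * x * (s - 2 * q) * 4) / 8.
  rewrite /E1.
  have -> : s ^+ 3 = s * (d ^+ 2 + 4 * d * x) by rewrite -sE; ring.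
  by field.
rewrite e; clearbody E1; rewrite ler_norml; apply/andP; split.
- have : d * E1 >= - (6 * (d * s ^+ 2)) by nra.
  have : 0 <= d ^+ 2 * x * (s - 2 * q) * 4 by nra.
  have : 0 <= d ^+ 3 * s by nra.
  have : 0 <= d^+3 * q by nra.
  have : 0 <= d ^+ 2 * x by nra.
  lra.
- have : d * E1 <= 3 * (d * s ^+ 2) + 2 * (d * s) + d ^+ 3 * s + d ^+ 3 by nra.
  have : 0 <= d^+3 * q by nra.
  have : 0 <= d ^+ 2 * x by nra.
  lra.
Qed.
Lemma sum_cubes (R : realType) (a : int) (n : nat) :
  4 * int_interval_sum a (a + n%:Z) (fun k => (k%:~R : R) ^+ 3) =
  (a%:~R + n%:R) ^+ 2 * (a%:~R + n%:R + 1) ^+ 2 - a%:~R ^+ 2 * (a%:~R + 1) ^+ 2.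
Proof.
rewrite /int_interval_sum (_ : absz (a + n%:Z - a)%R = n); last by rewrite (addrC a) addrK.
rewrite big_map big_seq_cond (eq_bigl (fun i => i \in iota 0 n)); last first.
  move=> i /=; rewrite mem_iota lerD2l lez_nat add0n; by case: ltnP.
rewrite -big_seq.
elim: n => [|n IH]; first by rewrite big_nil; ring.
have -> : iota 0 n.+1 = iota 0 n ++ [:: n] by rewrite -addn1 iotaD.
rewrite big_cat /= big_cons big_nil mulrDr IH.
rewrite !rmorphD /=.
change ((n.+1%:Z)%:~R : R) with (n.+1%:R : R).
rewrite -[n.+1]addn1 natrD.
ring.
Qed.

Theorem proposition3 :
  exists C : rat, 0 <= C /\
  forall (R : realType) (d : nat) (x : R), 0 < x -> d%:R <= x ->
    `| int_interval_sum (Kd d x - d%:Z) (Kd d x) (fun k => (k%:~R : R) ^+ 3)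
       - x * (d%:R ^+ 2 * Num.sqrt (d%:R * x)) |
    <= ratr C * x * (d%:R ^+ 3 * Num.sqrt d%:R / Num.sqrt x + d%:R ^+ 2).
Proof.
exists 8%:R; split; first by [].
move=> R d x x0 dx; rewrite ratr_nat.
case: d dx => [|d'] dx.
  rewrite /int_interval_sum subr0 subrr /= big_nil.
  rewrite !expr0n /= !mul0r !mulr0 sub0r normrN normr0 addr0 mulr0.
  by [].
set d := d'.+1 in dx *.
set K := Kd d x.
have d1 : 1 <= (d%:R : R) by rewrite ler1n.
set Kr : R := K%:~R.
set s := Num.sqrt ((d%:R : R) ^+ 2 + 4 * d%:R * x).
have hs0 : 0 <= (d%:R : R) ^+ 2 + 4 * d%:R * x by nra.
have s0 : 0 <= s by apply: sqrtr_ge0.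
have sE : s ^+ 2 = (d%:R : R) ^+ 2 + 4 * d%:R * x by rewrite sqr_sqrtr.
have [Kl Ku] : Kr <= (d%:R + s) / 2 /\ (d%:R + s) / 2 < Kr + 1.
  have := floor_itv ((d%:R + s) / 2 : R).
  rewrite -/(Kd d x) -/K => /andP [h1 h2]; split => //.
  by rewrite rmorphD /= in h2.
set q := Num.sqrt ((d%:R : R) * x).
have q0 : 0 <= q by apply: sqrtr_ge0.
have qE : q ^+ 2 = (d%:R : R) * x by rewrite sqr_sqrtr //; nra.
have hS : int_interval_sum (K - d%:Z) K (fun k => (k%:~R : R) ^+ 3) =
   d%:R * ((2 * Kr - d%:R) + 1) * ((2 * Kr - d%:R) ^+ 2 + d%:R ^+ 2 + 2 * (2 * Kr - d%:R)) / 8.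
  have h := sum_cubes R (K - d%:Z) d.
  rewrite subrK rmorphB /= -/Kr in h.
  apply: (@mulfI _ 4); first by rewrite pnatr_eq0.
  rewrite h.
  have -> : ((d%:Z)%:~R : R) = d%:R by [].
  by field.
have hR : 8%:R * x * ((d%:R : R) ^+ 3 * Num.sqrt d%:R / Num.sqrt x + d%:R ^+ 2)
   = 8 * (d%:R ^+ 3 * q + d%:R ^+ 2 * x).
  have vx : 0 < Num.sqrt x by rewrite sqrtr_gt0.
  have vE : Num.sqrt x ^+ 2 = x by rewrite sqr_sqrtr // ltW.
  rewrite /q sqrtrM ?ler0n //.
  move: vx vE; set v := Num.sqrt x; set r := Num.sqrt (d%:R : R) => vx vE.
  rewrite -vE; field.
  by rewrite gt_eqF.
rewrite hS hR.
apply: (@core R _ _ _ s) => //.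
- move: Kl; clear; lra.
- move: Ku; clear; lra.
Qed.
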